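(* Let $n$ training samples carry labels in $\{1,\dots,K\}$ with indicator matrix $F\in\mathbb{R}^{K\times n}$ (rows $F_1,\dots,F_K$). Let the basis $G_1,\dots,G_r$ ($r\le n$) be a subset of the training samples with every class containing at least one basis vector, and let $F_{G_i}$ be the class indicator of $G_i$. Let $W\in\mathbb{R}^{r\times n}$ be entrywise nonnegative with positive column sums, $S=\operatorname{diag}(\mathbf{1}^TW)$, $\tilde W=WS^{-1}$ of full row rank, and suppose $W_{ij}=0$ whenever $F_{G_i}\neq F_j$. For each class $k$ let $\tilde W^{(k)}$ be the submatrix of $\tilde W$ with rows indexed by the basis vectors of class $k$ and columns indexed by the training samples of class $k$. Then the following are equivalent: (i) for every $k$, $F_k/\|F_k\|_2$ is a right singular vector of $\tilde W$ whose singular value equals the largest singular value of $\tilde W^{(k)}$; (ii) the row sums of $\tilde W$ are equal within each class: $\sum_l\tilde W_{il}=\sum_l\tilde W_{jl}$ for all $i,j$ with $F_{G_i}=F_{G_j}$.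
   Context: The columns of $F$ are standard basis vectors of $\mathbb{R}^K$: $F_j=e_k$ iff sample $j$ is in class $k$. Under the stated (ideal bipartite-graph) condition, after grouping rows and columns by class, $\tilde W$ is block diagonal with blocks $\tilde W^{(k)}$; statement (i) is the meaning of ''the rows of $F$ are the right singular vectors of $\tilde W$ corresponding to the largest singular values'' (of the respective class blocks). *)

(* Defs.v *)
From HB Require Import structures.
From mathcomp Require Import all_boot all_order all_algebra.
Set Implicit Arguments. Unset Strict Implicit. Unset Printing Implicit Defensive.
Import Order.TTheory GRing.Theory Num.Theory.
Local Open Scope ring_scope.

Section Defs.
Variable R : rcfType.

Definition vnorm m (v : 'cV[R]_m) : R := Num.sqrt (\sum_i v i 0 ^+ 2).

Definition sv_triple m n (A : 'M[R]_(m, n)) (u : 'cV[R]_m) (v : 'cV[R]_n) (s : R) :=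
  [/\ 0 <= s, vnorm u = 1, vnorm v = 1, A *m v = s *: u & A^T *m u = s *: v].

Definition right_singular_vector m n (A : 'M[R]_(m, n)) (v : 'cV[R]_n) (s : R) :=
  exists u, sv_triple A u v s.

Definition singular_value m n (A : 'M[R]_(m, n)) (s : R) :=
  exists u v, sv_triple A u v s.

Definition largest_singular_value m n (A : 'M[R]_(m, n)) (s : R) :=
  singular_value A s /\ forall t, singular_value A t -> t <= s.

Definition indicator K n (lab : 'I_n -> 'I_K) : 'M[R]_(K, n) :=
  \matrix_(k, j) (lab j == k)%:R.

Definition colsum_diag r n (W : 'M[R]_(r, n)) : 'M[R]_n :=
  diag_mx (\row_j \sum_i W i j).
Definition Wtilde r n (W : 'M[R]_(r, n)) : 'M[R]_(r, n) :=
  W *m invmx (colsum_diag W).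

Definition basis_of_class K n r (lab : 'I_n -> 'I_K) (g : 'I_r -> 'I_n) (k : 'I_K)
  : {set 'I_r} := [set i | lab (g i) == k].
Definition samples_of_class K n (lab : 'I_n -> 'I_K) (k : 'I_K) : {set 'I_n} :=
  [set j | lab j == k].

Definition class_block K n r (lab : 'I_n -> 'I_K) (g : 'I_r -> 'I_n) (k : 'I_K)
  (A : 'M[R]_(r, n)) : 'M[R]_(#|basis_of_class lab g k|, #|samples_of_class lab k|) :=
  mxsub (fun i : 'I_#|basis_of_class lab g k| => enum_val i)
        (fun j : 'I_#|samples_of_class lab k| => enum_val j) A.

End Defs.

(* Main.v *)
Require Import Defs.
From HB Require Import structures.
From mathcomp Require Import all_boot all_order all_algebra.
From mathcomp Require Import ring lra.
Set Warnings "-all".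
Import Order.TTheory GRing.Theory Num.Theory.
Local Open Scope ring_scope.

Lemma wcs (R : rcfType) n (w v : 'I_n -> R) : (forall l, 0 <= w l) ->
  (\sum_l w l * v l)^+2 <= (\sum_l w l) * (\sum_l w l * v l ^+ 2).
Proof.
move=> Hw.
have H0 : 0 <= \sum_l \sum_l' w l * w l' * (v l - v l') ^+ 2.
  apply: sumr_ge0 => l _; apply: sumr_ge0 => l' _.
  by apply: mulr_ge0; [apply: mulr_ge0 | exact: sqr_ge0].
have E : \sum_l \sum_l' w l * w l' * (v l - v l') ^+ 2 =
   2%:R * ((\sum_l w l) * (\sum_l w l * v l ^+ 2) - (\sum_l w l * v l)^+2).
  transitivity (\sum_l \sum_l' ((w l * v l ^+ 2) * w l' + w l * (w l' * v l' ^+2)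
       - 2%:R * ((w l * v l) * (w l' * v l')))).
    by apply: eq_bigr => l _; apply: eq_bigr => l' _; ring.
  transitivity ((\sum_l w l * v l ^+ 2) * (\sum_l w l) + (\sum_l w l) * (\sum_l w l * v l^+2)
     - 2%:R * ((\sum_l w l * v l) * (\sum_l w l * v l))); last by rewrite expr2; ring.
  rewrite !big_distrlr /= mulr_sumr -big_split -sumrB /=.
  apply: eq_bigr => l _; rewrite mulr_sumr -big_split -sumrB /=.
  by apply: eq_bigr => l' _.
rewrite E pmulr_rge0 ?ltr0n // subr_ge0 in H0.
exact: H0.
Qed.

Lemma opnorm_bound (R : rcfType) m n (B : 'M[R]_(m, n)) (c : R) (v : 'cV[R]_n) :
  0 <= c -> (forall i j, 0 <= B i j) -> (forall i, \sum_l B i l = c) ->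
  (forall l, \sum_i B i l = 1) ->
  \sum_i ((B *m v) i 0)^+2 <= c * \sum_l (v l 0)^+2.
Proof.
move=> Hc0 H0 Hr Hc.
apply: le_trans (_ : \sum_i c * \sum_l B i l * v l 0 ^+ 2 <= _).
  apply: ler_sum => i _; rewrite mxE -(Hr i); exact: wcs.
rewrite -mulr_sumr exchange_big /=; apply: ler_wpM2l => //.
rewrite le_eqVlt; apply/orP; left; apply/eqP; apply: eq_bigr => l _.
by rewrite -mulr_suml Hc mul1r.
Qed.

Lemma vnorm_sq (R : rcfType) m (u : 'cV[R]_m) : vnorm u = 1 -> \sum_i u i 0 ^+ 2 = 1.
Proof.
rewrite /vnorm => H.
rewrite -(@sqr_sqrtr _ (\sum_i u i 0 ^+ 2)) ?H ?expr1n //.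
by apply: sumr_ge0 => i _; exact: sqr_ge0.
Qed.

Lemma sum_ind (R : rcfType) p (P : pred 'I_p) :
  \sum_i ((P i)%:R : R) = (#|[set i | P i]|)%:R.
Proof.
have -> : (#|[set i | P i]|)%:R = \sum_(i in [set i | P i]) (1 : R) by rewrite sumr_const.
rewrite [RHS]big_mkcond /=; apply: eq_bigr => i _.
by rewrite inE; case: (P i).
Qed.

Lemma vnorm_ind (R : rcfType) p (P : pred 'I_p) (c : R) :
  vnorm (c *: \col_i ((P i)%:R : R)) = Num.sqrt (c ^+ 2 * (#|[set i | P i]|)%:R).
Proof.
rewrite /vnorm -sum_ind mulr_sumr; congr (Num.sqrt _); apply: eq_bigr => i _.
by rewrite !mxE; case: (P i); rewrite ?mulr1 ?mulr0 ?expr0n.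
Qed.

Lemma vnorm_const (R : rcfType) p (c : R) :
  vnorm (c *: const_mx 1 : 'cV[R]_p) = Num.sqrt (c ^+ 2 * p%:R).
Proof.
have -> : (p%:R : R) = \sum_(i < p) (1 : R) by rewrite sumr_const card_ord.
rewrite /vnorm mulr_sumr; congr (Num.sqrt _).
by apply: eq_bigr => i _; rewrite !mxE !mulr1.
Qed.

Lemma unit_vec (R : rcfType) (a : R) (p : nat) :
  a = Num.sqrt p%:R -> (0 < p)%N -> Num.sqrt (a^-1 ^+ 2 * p%:R) = 1.
Proof.
move=> -> hp; rewrite exprVn sqr_sqrtr ?ler0n // mulVf ?sqrtr1 //.
by rewrite pnatr_eq0 -lt0n.
Qed.

Lemma trinj (R : rcfType) r n (A : 'M[R]_(r, n)) (y z : 'cV[R]_r) :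
  row_free A -> A^T *m y = A^T *m z -> y = z.
Proof.
move=> hA E; apply: trmx_inj; apply: (row_free_inj hA).
by have := congr1 trmx E; rewrite !trmx_mul trmxK.
Qed.

Lemma main_abs (R : rcfType) (K n r : nat) (lab : 'I_n -> 'I_K)
  (g : 'I_r -> 'I_n) (A : 'M[R]_(r, n)) :
  (forall k : 'I_K, exists i : 'I_r, lab (g i) = k) ->
  (forall i j, 0 <= A i j) ->
  (forall j, \sum_i A i j = 1) ->
  row_free A ->
  (forall i j, lab (g i) != lab j -> A i j = 0) ->
  (forall k : 'I_K,
     let Fk := (row k (indicator R lab))^T in
     exists s, largest_singular_value (class_block lab g k A) s /\
               right_singular_vector A ((vnorm Fk)^-1 *: Fk) s)
  <->
  (forall i j : 'I_r, lab (g i) = lab (g j) ->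
     \sum_l A i l = \sum_l A j l).
Proof.
move=> Hcls H0 Hc hA Hb.
have T : forall (k : 'I_K) i l, A i l * (lab (g i) == k)%:R = A i l * (lab l == k)%:R.
  move=> k i l; case: (eqVneq (lab (g i)) (lab l)) => [->//|ne].
  by rewrite Hb // !mul0r.
have colk : forall k l, \sum_i A i l * (lab (g i) == k)%:R = (lab l == k)%:R.
  by move=> k l; rewrite (eq_bigr _ (fun i _ => T k i l)) -mulr_suml Hc mul1r.
have Fk_E : forall k, (row k (indicator R lab))^T = \col_l ((lab l == k)%:R : R).
  by move=> k; apply/matrixP => l j; rewrite !mxE.
pose x := fun k : 'I_K => \col_i ((lab (g i) == k)%:R : R) : 'cV_r.
have ATx : forall k, A^T *m x k = \col_l ((lab l == k)%:R).
  move=> k; apply/matrixP => l j; rewrite !mxE -colk; apply: eq_bigr => i _.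
  by rewrite !mxE.
have AF : forall k, A *m \col_l ((lab l == k)%:R) =
    \col_i ((\sum_l A i l) * (lab (g i) == k)%:R).
  move=> k; apply/matrixP => i j; rewrite !mxE mulr_suml; apply: eq_bigr => l _.
  by rewrite mxE T.
have vF : forall k, vnorm (\col_l ((lab l == k)%:R : R)) =
    Num.sqrt #|samples_of_class lab k|%:R.
  by move=> k; rewrite -[X in vnorm X]scale1r vnorm_ind expr1n mul1r.
split.
- move=> H i j Hij.
  have [s [_ [u [s0 Hu Hv E1 E2]]]] := H (lab (g i)).
  move: E1 E2; rewrite Fk_E vF.
  set k := lab (g i).
  set F := \col_l ((lab l == k)%:R : R).
  set b := Num.sqrt _ => E1 E2.
  have b0 : b != 0.
    rewrite gt_eqF // sqrtr_gt0 ltr0n; apply/card_gt0P; exists (g i).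
    by rewrite inE.
  have E1' : A *m F = (b * s) *: u.
    by rewrite -scalerA -E1 -scalemxAr scalerA mulfV // scale1r.
  have key : A *m F = s ^+ 2 *: x k.
    apply: (@trinj _ _ _ _ _ _ hA); rewrite -scalemxAr ATx -/F E1' -scalemxAr E2 !scalerA.
    congr (_ *: _); field; exact: b0.
  have := congr1 (fun M : 'cV[R]_r => M i 0) key; have := congr1 (fun M : 'cV[R]_r => M j 0) key.
  rewrite /= AF !mxE -Hij eqxx /= !mulr1 => -> ->.
  by [].
- move=> H k.
  have [i0 Hi0] := Hcls k.
  pose rho := \sum_l A i0 l.
  have Hrow : forall i, lab (g i) = k -> \sum_l A i l = rho.
    by move=> i Hi; apply: H; rewrite Hi Hi0.
  pose F := \col_l ((lab l == k)%:R : R) : 'cV_n.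
  have AF' : A *m F = rho *: x k.
    apply/matrixP => i j; rewrite AF !mxE.
    by case E: (lab (g i) == k); [move/eqP: E => /Hrow -> | rewrite !mulr0].
  pose m := #|basis_of_class lab g k|.
  pose nk := #|samples_of_class lab k|.
  have m0 : (0 < m)%N by apply/card_gt0P; exists i0; rewrite inE Hi0.
  have n0 : (0 < nk)%N by apply/card_gt0P; exists (g i0); rewrite inE Hi0.
  have mrho : m%:R * rho = nk%:R.
    transitivity (\sum_i \sum_l A i l * (lab (g i) == k)%:R).
      rewrite /m /basis_of_class -sum_ind mulr_suml; apply: eq_bigr => i _.
      rewrite -mulr_suml.
      by case E: (lab (g i) == k); [move/eqP: E => /Hrow ->; rewrite mulr1 mul1r | rewrite !mulr0 mul0r].
    rewrite exchange_big /= (eq_bigr _ (fun l _ => colk k l)).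
    by rewrite sum_ind.
  pose a := Num.sqrt (m%:R : R).
  pose b := Num.sqrt (nk%:R : R).
  have a0 : a != 0 by rewrite gt_eqF // sqrtr_gt0 ltr0n.
  have b0 : b != 0 by rewrite gt_eqF // sqrtr_gt0 ltr0n.
  have rhoE : rho = b ^+ 2 / a ^+ 2.
    rewrite /a /b !sqr_sqrtr ?ler0n // -mrho; field.
    by rewrite pnatr_eq0 -lt0n.
  have rho0 : 0 <= rho by apply: sumr_ge0.
  have ba0 : 0 <= b / a by rewrite divr_ge0 ?sqrtr_ge0.
  exists (b / a); split.
  + pose B := class_block lab g k A.
    have BE : forall i j, B i j = A (enum_val i) (enum_val j).
      by move=> i j; rewrite /B /class_block /mxsub mxE.
    have B0 : forall i j, 0 <= B i j by move=> i j; rewrite BE.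
    have Brow : forall i, \sum_j B i j = rho.
      move=> i; under eq_bigr do rewrite BE.
      rewrite -(big_enum_val (fun l => A (enum_val i) l)) big_mkcond /=.
      have ei := enum_valP i; rewrite inE in ei.
      rewrite -(Hrow _ (eqP ei)); apply: eq_bigr => l _.
      rewrite inE; have := T k (enum_val i) l; rewrite ei mulr1 => h.
      by rewrite {2}h; case: (lab l == k); rewrite ?mulr1 ?mulr0.
    have Bcol : forall j, \sum_i B i j = 1.
      move=> j; under eq_bigr do rewrite BE.
      rewrite -(big_enum_val (fun i => A i (enum_val j))) big_mkcond /=.
      have ej := enum_valP j; rewrite inE in ej.
      have -> : (1:R) = (lab (enum_val j) == k)%:R by rewrite ej.
      rewrite -colk; apply: eq_bigr => i _.
      by rewrite inE; case: (lab (g i) == k); rewrite ?mulr1 ?mulr0.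
    split.
    * exists (a^-1 *: const_mx 1), (b^-1 *: const_mx 1); split => //.
      - by rewrite vnorm_const; apply: unit_vec.
      - by rewrite vnorm_const; apply: unit_vec.
      - apply/matrixP => i j; rewrite !mxE.
        under eq_bigr do rewrite !mxE.
        rewrite -mulr_suml.
        have := Brow i; under eq_bigr do rewrite BE; move=> ->.
        rewrite rhoE; field.
        by rewrite a0 b0.
      - apply/matrixP => i j; rewrite !mxE.
        under eq_bigr do rewrite !mxE.
        rewrite -mulr_suml.
        have := Bcol i; under eq_bigr do rewrite BE; move=> ->.
        field.
        by rewrite a0 b0.
    * move=> t [uu [vv [t0 Hu Hv E1 E2]]].
      have := @opnorm_bound _ _ _ B rho vv rho0 B0 Brow Bcol.
      rewrite E1 (@vnorm_sq _ _ _ Hv) mulr1.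
      under eq_bigr do rewrite mxE exprMn.
      rewrite -mulr_sumr (@vnorm_sq _ _ _ Hu) mulr1 rhoE -expr_div_n => h.
      nra.
  + exists (a^-1 *: x k); rewrite Fk_E vF -/nk -/b; split => //.
    * by rewrite vnorm_ind; apply: unit_vec.
    * by rewrite vnorm_ind; apply: unit_vec.
    * rewrite -scalemxAr AF' !scalerA rhoE; congr (_ *: _); field.
      by rewrite a0 b0.
    * rewrite -scalemxAr ATx !scalerA; congr (_ *: _); field.
      by rewrite a0 b0.
Qed.

Lemma Wtilde_E (R : rcfType) r n (W : 'M[R]_(r, n)) :
  (forall j, 0 < \sum_i W i j) ->
  forall i j, Wtilde W i j = W i j / \sum_i W i j.
Proof.
move=> Hpos.
set D' : 'M[R]_n := diag_mx (\row_j (\sum_i W i j)^-1).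
have Hu : colsum_diag W \in unitmx.
  rewrite unitmxE det_diag unitfE; apply/prodf_neq0 => j _.
  by rewrite mxE (gt_eqF (Hpos j)) .
have -> : Wtilde W = W *m D'.
  suff eW : W = (W *m D') *m colsum_diag W by rewrite /Wtilde {1}eW mulmxK.
  rewrite -mulmxA /colsum_diag mulmx_diag.
  rewrite -[LHS]mulmx1; congr (_ *m _).
  apply/matrixP => a b; rewrite !mxE.
  case: (a =P b) => [->|]; last by move=> _; rewrite !mulr0n.
  by rewrite !mulr1n mulVf // gt_eqF.
by move=> i j; rewrite /D' mul_mx_diag !mxE.
Qed.

Theorem theorem3 (R : rcfType) (K n r : nat) (lab : 'I_n -> 'I_K)
  (g : 'I_r -> 'I_n) (W : 'M[R]_(r, n)) :
  injective g -> (r <= n)%N ->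
  (forall k : 'I_K, exists i : 'I_r, lab (g i) = k) ->
  (forall i j, 0 <= W i j) ->
  (forall j, 0 < \sum_i W i j) ->
  row_free (Wtilde W) ->
  (forall i j, lab (g i) != lab j -> W i j = 0) ->
  (forall k : 'I_K,
     let Fk := (row k (indicator R lab))^T in
     exists s, largest_singular_value (class_block lab g k (Wtilde W)) s /\
               right_singular_vector (Wtilde W) ((vnorm Fk)^-1 *: Fk) s)
  <->
  (forall i j : 'I_r, lab (g i) = lab (g j) ->
     \sum_l Wtilde W i l = \sum_l Wtilde W j l).
Proof.
move=> _ _ Hcls H0 Hpos hA Hb.
have E := @Wtilde_E _ _ _ W Hpos.
apply: main_abs => //.
- by move=> i j; rewrite E divr_ge0 // ltW.
- move=> j; under eq_bigr do rewrite E.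
  by rewrite -mulr_suml mulfV // gt_eqF.
- by move=> i j h; rewrite E Hb // mul0r.
Qed.
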